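(* Let $v^{(1)},\dots,v^{(p)}\in\mathbb{R}^n$ (all entries finite) and let $V$ be the $n\times p$ matrix with columns $v^{(k)}$. Then the operator $T:\mathbb{R}^n\to\mathbb{R}^n$, $$T_i(x)=\min_{k\in[p]}\Big[-V_{ik}+\max_{j\in[n],\,j\neq i}(V_{jk}+x_j)\Big],\qquad i\in[n],$$ has a finite eigenvector, i.e., there exist $a\in\mathbb{R}^n$ and $\lambda\in\mathbb{R}$ such that $T(a)=\lambda+a$ (and then $\lambda=\rho(T)$).
   Context: $\lambda+a$ denotes $(\lambda+a_i)_i$. $\rho(T)=\sup\{\lambda\in\mathbb{R}\cup\{-\infty\}:\exists u\in(\mathbb{R}\cup\{-\infty\})^n,\ u\not\equiv-\infty,\ T(u)=\lambda+u\}$ for $T$ extended to $(\mathbb{R}\cup\{-\infty\})^n$ by the same formula. Here $n\ge2$ is implicit. *)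

(* Defs.v *)
From HB Require Import structures.
From mathcomp Require Import all_boot all_order all_algebra.
From mathcomp Require Import all_classical all_reals ereal.
Set Implicit Arguments. Unset Strict Implicit. Unset Printing Implicit Defensive.
Import Order.TTheory GRing.Theory Num.Theory.
Local Open Scope ring_scope.
Local Open Scope ereal_scope.

(* The operator T_i(x) = min_k [ -V_ik + max_{j<>i} (V_jk + x_j) ],
   defined on (R u {-oo})^n (we use \bar R and only feed it vectors with
   no +oo entry).  With n >= 2 and p >= 1 the min / max are over nonempty
   index sets, so the neutral elements +oo / -oo never matter. *)
Definition Top (R : realType) (n p : nat) (V : 'M[R]_(n, p))
    (x : 'I_n -> \bar R) (i : 'I_n) : \bar R :=
  \big[Order.min/+oo]_(k < p)
     ( - (V i k)%:E + \big[Order.max/-oo]_(j < n | j != i) ((V j k)%:E + x j)).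

Definition admissible_vec (R : realType) (n : nat) (u : 'I_n -> \bar R) : Prop :=
  (forall j, u j != +oo) /\ (exists j, u j != -oo).

Definition rho (R : realType) (n p : nat) (V : 'M[R]_(n, p)) : \bar R :=
  ereal_sup [set lam : \bar R | lam != +oo /\
     exists u : 'I_n -> \bar R, admissible_vec u /\
       forall i, Top V u i = lam + u i].

(* Main.v *)
Require Import Defs.
From HB Require Import structures.
From mathcomp Require Import all_boot all_order all_algebra.
From mathcomp Require Import all_classical all_reals ereal.
From mathcomp Require Import topology normedtype sequences.
Import Order.TTheory GRing.Theory Num.Theory.
From mathcomp Require Import ring lra.
Local Open Scope ring_scope.
Section TopProps.
Context (R : realType).
Local Open Scope ereal_scope.

Lemma bigmaxE_addr (I : finType) (P : pred I) (F : I -> \bar R) (c : R) j0 :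
  P j0 -> \big[Order.max/-oo]_(j | P j) (F j + c%:E)
          = \big[Order.max/-oo]_(j | P j) F j + c%:E.
Proof.
move=> Pj0.
have [j1 Pj1 e] := eq_bigmax j0 P F Pj0 (fun i _ => leNye (F i)).
rewrite e.
apply: le_anti; apply/andP; split.
  apply: bigmax_le; first exact: leNye.
  by move=> i Pi; apply: leeD2r; rewrite -e; exact: (le_bigmax_cond -oo F).
exact: (le_bigmax_cond -oo (fun j => F j + c%:E) Pj1).
Qed.

Lemma bigminE_addr (I : finType) (P : pred I) (F : I -> \bar R) (c : R) j0 :
  P j0 -> \big[Order.min/+oo]_(j | P j) (F j + c%:E)
          = \big[Order.min/+oo]_(j | P j) F j + c%:E.
Proof.
move=> Pj0.
have [j1 Pj1 e] := eq_bigmin j0 P F Pj0 (fun i _ => leey (F i)).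
rewrite e.
apply: le_anti; apply/andP; split.
  exact: (bigmin_le_cond +oo (fun j => F j + c%:E) Pj1).
apply: le_bigmin; first exact: leey.
by move=> i Pi; apply: leeD2r; rewrite -e; exact: (bigmin_le_cond +oo F).
Qed.

Lemma bigmaxE_fin (I : finType) (P : pred I) (F : I -> R) j0 :
  P j0 -> exists2 j1, P j1 & \big[Order.max/-oo]_(j | P j) (F j)%:E = (F j1)%:E.
Proof.
move=> Pj0.
have [j1 Pj1 ->] := eq_bigmax j0 P (fun j => (F j)%:E) Pj0 (fun i _ => leNye _).
by exists j1.
Qed.

Lemma bigminE_fin (I : finType) (P : pred I) (F : I -> R) j0 :
  P j0 -> exists2 j1, P j1 & \big[Order.min/+oo]_(j | P j) (F j)%:E = (F j1)%:E.
Proof.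
move=> Pj0.
have [j1 Pj1 ->] := eq_bigmin j0 P (fun j => (F j)%:E) Pj0 (fun i _ => leey _).
by exists j1.
Qed.

Context (n p : nat) (V : 'M[R]_(n, p)).

Lemma Top_mono (x y : 'I_n -> \bar R) i :
  (forall j, x j <= y j) -> Top V x i <= Top V y i.
Proof.
move=> xy; apply: le_bigmin2 => k _; apply: leeD2l.
by apply: le_bigmax2 => j _; apply: leeD2l.
Qed.

Hypothesis n2 : (1 < n)%N.
Hypothesis p0 : (0 < p)%N.

Lemma exists_other (i : 'I_n) : exists j : 'I_n, j != i.
Proof.
case: (eqVneq i (Ordinal (ltnW n2))) => [->|h]; last by exists (Ordinal (ltnW n2)); rewrite eq_sym.
by exists (Ordinal n2); apply/eqP => /(congr1 val).
Qed.

Lemma Top_fin (x : 'I_n -> R) i :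
  exists2 k : 'I_p, true & exists2 j : 'I_n, j != i &
  Top V (fun j => (x j)%:E) i = (- V i k + (V j k + x j))%R%:E.
Proof.
have [j0 hj0] := exists_other i.
pose G k := (- (V i k)%:E + \big[Order.max/-oo]_(j | j != i) ((V j k)%:E + (x j)%:E)).
have hG k : exists2 j, j != i & G k = (- V i k + (V j k + x j))%R%:E.
  have [j1 hj1 e] := @bigmaxE_fin _ (fun j => j != i) (fun j => (V j k + x j)%R) _ hj0.
  by exists j1 => //; rewrite /G e.
have [c hc] : exists c : 'I_p -> R, forall k, G k = (c k)%:E.
  exists (fun k => fine (G k)); move=> k; by have [j _ ->] := hG k.
rewrite /Top; have -> : \big[Order.min/+oo]_(k < p) G k =
     \big[Order.min/+oo]_(k < p) (c k)%:E by apply: eq_bigr => k _; rewrite hc.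
have := @bigminE_fin _ xpredT c (Ordinal p0) isT.
move=> [k1 _ e].
rewrite e; exists k1; first by [].
have [j hj e2] := hG k1; exists j; first exact: hj.
by rewrite -hc.
Qed.

Lemma Top_shift (x : 'I_n -> R) (c : R) i :
  Top V (fun j => (x j + c)%R%:E) i = Top V (fun j => (x j)%:E) i + c%:E.
Proof.
have [j0 hj0] := exists_other i.
rewrite /Top -(@bigminE_addr _ xpredT _ _ (Ordinal p0) isT).
apply: eq_bigr => k _.
rewrite -addeA; congr (_ + _).
rewrite -(@bigmaxE_addr _ (fun j => j != i) _ _ _ hj0); apply: eq_bigr => j _.
by rewrite EFinD addeA.
Qed.

Definition TR (x : 'I_n -> R) (i : 'I_n) : R := fine (Top V (fun j => (x j)%:E) i).

Lemma TR_E x i : Top V (fun j => (x j)%:E) i = (TR x i)%:E.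
Proof. by rewrite /TR; have [k _ [j _ ->]] := Top_fin x i. Qed.

Lemma TR_mono x y i : (forall j, x j <= y j)%R -> (TR x i <= TR y i)%R.
Proof.
move=> h; rewrite -lee_fin -!TR_E; apply: Top_mono => j; by rewrite lee_fin.
Qed.

Lemma TR_shift x c i : TR (fun j => x j + c)%R i = (TR x i + c)%R.
Proof.
apply: EFin_inj; rewrite EFinD -!TR_E; exact: Top_shift.
Qed.

Definition Kv : R := \big[Order.max/0%R]_(i < n) \big[Order.max/0%R]_(k < p) `|V i k|%R.

Lemma hV i k : (`|V i k| <= Kv)%R.
Proof.
apply: le_trans (le_bigmax 0%R (fun k => `|V i k|%R) k) _.
exact: (le_bigmax 0%R (fun i => \big[Order.max/0%R]_(k < p) `|V i k|%R) i).
Qed.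

Lemma Kv0 : (0 <= Kv)%R.
Proof. exact: bigmax_ge_id. Qed.

Lemma TR_lo x i j : j != i -> (x j - 2 * Kv <= TR x i)%R.
Proof.
move=> hj; rewrite -lee_fin -TR_E /Top.
apply: le_bigmin; first exact: leey.
move=> k _.
have h := @le_bigmax_cond _ _ _ -oo j (fun j => j != i) (fun j => (V j k)%:E + (x j)%:E) hj.
apply: le_trans (leeD2l _ h).
rewrite -EFinN -!EFinD lee_fin.
have := hV i k; have := hV j k; rewrite !ler_norml => /andP[a1 a2] /andP[b1 b2].
lra.
Qed.

Lemma TR_up x i : exists2 j, j != i & (TR x i <= x j + 2 * Kv)%R.
Proof.
have [k _ [j hj e]] := Top_fin x i.
exists j => //.
have e2 : TR x i = (- V i k + (V j k + x j))%R.
  by apply: EFin_inj; rewrite -TR_E e.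
rewrite e2.
have := hV i k; have := hV j k; rewrite !ler_norml => /andP[a1 a2] /andP[b1 b2].
lra.
Qed.

End TopProps.

Section Extract.
Context (R : realType).

Definition conv_unif (m : nat) (w : nat -> nat -> R) (L : nat -> R) :=
  forall e, 0 < e -> exists N, forall k, (N <= k)%N ->
    forall l, (l < m)%N -> `|w l k - L l| < e.

Lemma strict_mono (f : nat -> nat) : (forall k, f k < f k.+1)%N ->
  forall a b, (a < b)%N -> (f a < f b)%N.
Proof.
move=> hf a b /subnKC <-; elim: (b - a.+1)%N => [|d ih].
  by rewrite addn0 hf.
by rewrite addnS; apply: ltn_trans ih (hf _).
Qed.

Lemma strict_ge (f : nat -> nat) : (forall k, f k < f k.+1)%N ->
  forall k, (k <= f k)%N.
Proof.
move=> hf; elim=> [|k ih] //; exact: leq_ltn_trans ih (hf k).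
Qed.

Lemma extract (B : R) (u : nat -> nat -> R) (hB : forall l k, `|u l k| <= B) m :
  exists f : nat -> nat, (forall k, f k < f k.+1)%N /\
    exists L, conv_unif m (fun l k => u l (f k)) L.
Proof.
elim: m => [|m [f [hf [L hL]]]].
  exists id; split => //; exists (fun _ => 0) => e e0; exists 0%N => k _ l.
  by rewrite ltn0.
pose v : nat -> R^o := fun k => u m (f k).
have bv : bounded_fun v.
  exists B; split; first exact: num_real.
  move=> M hM x _; apply: le_trans (hB _ _) (ltW hM).
have [g hg cg] := bolzano_weierstrass bv.
have hgs : forall k, (g k < g k.+1)%N.
  move=> k; rewrite ltnNge; apply/negP => h.
  by have := hg k.+1 k; rewrite leEnat h ltnn.
exists (f \o g); split.
  by move=> k /=; apply: strict_mono => //.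
exists (fun l => if l == m then limn (v \o g) else L l) => e e0.
have [N1 hN1] := hL e e0.
have := (cvgrPdist_lt (v \o g) (limn (v \o g))).1 cg e e0.
case=> N2 _ hN2.
exists (maxn N1 N2) => k hk l hl /=.
case: (eqVneq l m) => [->|hlm].
  rewrite distrC; apply: hN2 => /=.
  exact: leq_trans (leq_maxr _ _) hk.
have hlm' : (l < m)%N by rewrite ltn_neqAle hlm -ltnS.
apply: (hN1 (g k)) => //.
exact: leq_trans (leq_trans (leq_maxl _ _) hk) (@strict_ge g hgs k).
Qed.

End Extract.

Section Abstract.
Context (R : realType) (n : nat) (i0 : 'I_n).
Context (F : ('I_n -> R) -> 'I_n -> R) (K : R).
Hypothesis K0 : 0 <= K.
Hypothesis Fmono : forall x y i, (forall j, x j <= y j) -> F x i <= F y i.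
Hypothesis Fshift : forall x c i, F (fun j => x j + c) i = F x i + c.
Hypothesis Flo : forall x i j, j != i -> x j - K <= F x i.
Hypothesis Fup : forall x i, exists2 j, j != i & F x i <= x j + K.

Lemma F_nonexp_le x y e i : (forall j, x j <= y j + e) -> F x i <= F y i + e.
Proof. by move=> h; rewrite -Fshift; apply: Fmono. Qed.

Lemma F_nonexp x y e i : (forall j, `|x j - y j| <= e) -> `|F x i - F y i| <= e.
Proof.
move=> h; rewrite ler_norml.
have h1 : F x i <= F y i + e.
  by apply: F_nonexp_le => j; have := h j; rewrite ler_norml; lra.
have h2 : F y i <= F x i + e.
  by apply: F_nonexp_le => j; have := h j; rewrite ler_norml; lra.
apply/andP; split; lra.
Qed.

Lemma F_cst a i : F (fun _ => a) i = F (fun _ => 0) i + a.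
Proof.
rewrite -Fshift; congr (F _ _); apply: boolp.funext => j; by rewrite add0r.
Qed.

Lemma F0_bound i : `|F (fun _ => 0) i| <= K.
Proof.
have [j hj hup] := Fup (fun _ => 0) i.
have hlo := @Flo (fun _ => 0) i j hj.
rewrite ler_norml; apply/andP; split; lra.
Qed.

Section Discount.
Context (b : R) (b0 : 0 <= b) (b1 : b < 1).

Let G (x : 'I_n -> R) : 'I_n -> R := F (fun j => b * x j).
Let C := K / (1 - b).
Let y k := iter k G (fun _ => C).

Lemma C_eq : C = K + b * C.
Proof. rewrite /C; field; apply: lt0r_neq0; move: b1; lra. Qed.

Lemma C_ge0 : 0 <= C.
Proof. rewrite /C; apply: divr_ge0 => //. move: b1; lra. Qed.

Lemma G_mono x z i : (forall j, x j <= z j) -> G x i <= G z i.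
Proof. by move=> h; apply: Fmono => j; apply: ler_wpM2l. Qed.

Lemma G_cst a i : G (fun _ => a) i = F (fun _ => 0) i + b * a.
Proof. by rewrite /G F_cst. Qed.

Lemma y_dec k i : y k.+1 i <= y k i.
Proof.
elim: k i => [|k ih] i.
  rewrite /y /= G_cst; have := F0_bound i; rewrite ler_norml => /andP[_ h].
  have := C_eq; lra.
by rewrite /y /=; apply: G_mono => j; apply: ih.
Qed.

Lemma y_lb k i : - C <= y k i.
Proof.
elim: k i => [|k ih] i.
  by rewrite /y /=; have := C_ge0; lra.
rewrite /y /=; apply: (le_trans _ (@G_mono (fun _ => -C) (y k) i ih)).
rewrite G_cst; have := F0_bound i; rewrite ler_norml => /andP[h _].
have := C_eq; lra.
Qed.

Lemma y_dec_le k k' i : (k <= k')%N -> y k' i <= y k i.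
Proof.
move=> /subnKC <-; elim: (k' - k)%N => [|d ih]; first by rewrite addn0.
by rewrite addnS; apply: le_trans (y_dec _ _) ih.
Qed.

Let L i := inf (range (fun k => y k i)).

Lemma L_hasinf i : has_inf (range (fun k => y k i)).
Proof.
split; first by exists (y 0 i), 0%N.
exists (- C) => _ [k _ <-]; exact: y_lb.
Qed.

Lemma L_le i k : L i <= y k i.
Proof. by apply: ge_inf; [case: (L_hasinf i)| exists k]. Qed.

Lemma discount_fixed : exists x : 'I_n -> R, forall i, F (fun j => b * x j) i = x i.
Proof.
exists L => i; apply/eqP; rewrite eq_le; apply/andP; split.
  apply: lb_le_inf; first by exists (y 0 i), 0%N.
  move=> _ [k _ <-].
  apply: (le_trans _ (y_dec k i)); rewrite /y /=.
  apply: G_mono => j; exact: L_le.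
apply/ler_addgt0Pr => e e0.
have hch : forall j, exists k, y k j < L j + e.
  move=> j; have [_ [k _ <-] hk] := inf_adherent e0 (L_hasinf j).
  by exists k.
have [kf hkf] := boolp.choice hch.
pose M := (\max_(j < n) kf j)%N.
have hM j : y M j < L j + e.
  apply: le_lt_trans (hkf j); apply: y_dec_le.
  exact: (@leq_bigmax _ (fun j => kf j) j).
apply: (le_trans (L_le i M.+1)); rewrite /y /= -/(y M).
have -> : G (y M) i = F (fun j => b * y M j) i by [].
have h1 : F (fun j => b * y M j) i <= F (fun j => b * L j) i + b * e.
  apply: F_nonexp_le => j; have := hM j; rewrite -mulrDr => h.
  by apply: ler_wpM2l => //; apply: ltW.
have : b * e <= e by move: b1 b0 e0; nra.
lra.
Qed.

End Discount.

Lemma disc_bounds b x : 0 <= b -> b < 1 ->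
  (forall i, F (fun j => b * x j) i = x i) ->
  forall i, [/\ `|x i - x i0| <= 2 * K, `|(1 - b) * x i0| <= 3 * K &
   `|F (fun j => x j - x i0) i - (x i - x i0) - (1 - b) * x i0| <= 2 * K * (1 - b)].
Proof.
move=> b0 b1 fx.
case: (@arg_maxP _ _ _ i0 xpredT x isT) => m _ hm.
have [j hj hup] := Fup (fun j => b * x j) m; rewrite fx in hup.
have hxj := hm j isT.
have hK0 := K0.
have p1 : b * x j <= b * x m := ler_wpM2l b0 hxj.
have hA : (1 - b) * x m <= K by lra.
have hlo1 := @Flo (fun j => b * x j) j m; rewrite fx in hlo1.
have hlo2 := @Flo (fun j => b * x j) m j hj; rewrite fx in hlo2.
have hmj : m != j by rewrite eq_sym.
have {}hlo1 := hlo1 hmj.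
have p2 : b * (b * x m - K) <= b * x j := ler_wpM2l b0 hlo1.
have hB : - K <= (1 - b) * x m.
  have : 0 <= (1 + b) * ((1 - b) * x m + K) by lra.
  rewrite pmulr_rge0; last by lra.
  lra.
have hall z : x m - 2 * K <= x z <= x m.
  apply/andP; split; last exact: hm.
  case: (eqVneq z m) => [->|hzm]; first by lra.
  have := @Flo (fun j => b * x j) z m; rewrite fx eq_sym => /(_ hzm) h.
  lra.
move=> i; have /andP[hi1 hi2] := hall i; have /andP[h01 h02] := hall i0.
split.
- rewrite ler_norml; apply/andP; split; lra.
- have e1 : (1 - b) * x i0 = (1 - b) * x m - (1 - b) * (x m - x i0) by ring.
  have h3 : 0 <= (1 - b) * (x m - x i0) by apply: mulr_ge0; lra.
  have h4 : (1 - b) * (x m - x i0) <= 2 * K.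
    have : (1 - b) * (x m - x i0) <= 1 * (x m - x i0).
      by apply: ler_wpM2r; lra.
    lra.
  rewrite e1 ler_norml; apply/andP; split; lra.
have -> : F (fun j => x j - x i0) i = F x i - x i0 by rewrite Fshift.
have e2 : F (fun j => b * x j + (1 - b) * x i0) i = x i + (1 - b) * x i0.
  by rewrite Fshift fx.
have hne : `|F x i - F (fun j => b * x j + (1 - b) * x i0) i| <= 2 * K * (1 - b).
  apply: F_nonexp => z.
  have -> : x z - (b * x z + (1 - b) * x i0) = (1 - b) * (x z - x i0) by ring.
  rewrite normrM ger0_norm; last by lra.
  rewrite mulrC; apply: ler_wpM2r; first by lra.
  have /andP[hz1 hz2] := hall z.
  rewrite ler_norml; apply/andP; split; lra.
rewrite e2 in hne.
have -> : F x i - x i0 - (x i - x i0) - (1 - b) * x i0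
          = F x i - (x i + (1 - b) * x i0) by ring.
exact: hne.
Qed.

Lemma approx_eig (k : nat) : exists d : 'I_n -> R, exists c : R,
  [/\ forall j, `|d j| <= 2 * K, `|c| <= 3 * K &
      forall i, `|F d i - d i - c| <= 2 * K / (k.+1)%:R].
Proof.
pose b : R := k%:R / (k.+1)%:R.
have hk : 0 < (k.+1)%:R :> R by rewrite ltr0n.
have b0 : 0 <= b by apply: divr_ge0; [exact: ler0n| exact: ltW].
have e1 : 1 - b = 1 / (k.+1)%:R.
  rewrite /b -natr1; field; rewrite natr1; exact: lt0r_neq0.
have b1 : b < 1.
  have : 0 < 1 - b by rewrite e1 divr_gt0.
  lra.
have [x hx] := @discount_fixed b b0 b1.
exists (fun j => x j - x i0), ((1 - b) * x i0).
have hb := @disc_bounds b x b0 b1 hx.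
split.
- by move=> j; have [] := hb j.
- by have [] := hb i0.
move=> i; have [_ _ h] := hb i.
by move: h; rewrite [in X in _ <= X -> _]e1 mul1r.
Qed.

Lemma abstract_eig : exists d : 'I_n -> R, exists c : R, forall i, F d i = d i + c.
Proof.
have hex : forall k : nat, exists dc : ('I_n -> R) * R,
  [/\ forall j, `|dc.1 j| <= 2 * K, `|dc.2| <= 3 * K &
      forall i, `|F dc.1 i - dc.1 i - dc.2| <= 2 * K / (k.+1)%:R].
  by move=> k; have [d [c h]] := approx_eig k; exists (d, c).
have [D hD] := boolp.choice hex.
pose u l k := if l == n then (D k).2 else (D k).1 (insubd i0 l).
have hB : forall l k, `|u l k| <= 3 * K.
  move=> l k; rewrite /u; case: (D k) (hD k) => d c [h1 h2 _] /=.
  by case: ifP => _ //; apply: le_trans (h1 _) _; move: K0; lra.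
have [f [hf [L hL]]] := @extract R _ _ hB n.+1.
exists (fun j => L (val j)), (L n) => i.
apply/eqP; rewrite -subr_eq0 -normr_le0; apply/ler_addgt0Pr => e e0; rewrite add0r.
pose e' := e / 4.
have e'0 : 0 < e' by rewrite /e' divr_gt0.
have [N hN] := hL e' e'0.
have hKe : 0 <= 2 * K / e' by apply: divr_ge0; [move: K0; lra|exact: ltW].
pose M := Num.Def.archi_bound (2 * K / e').
have hM := archi_boundP hKe.
pose k := maxn N M.
have hfk : (k <= f k)%N := @strict_ge f hf k.
have hNk : (N <= k)%N := leq_maxl _ _.
have hMk : (M <= f k)%N := leq_trans (leq_maxr _ _) hfk.
have hu := hN k hNk.
have hd : forall j : 'I_n, `|(D (f k)).1 j - L (val j)| < e'.
  move=> j; have := hu (val j) (ltnW (ltn_ord j)).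
  by rewrite /u ifN_eq ?(ltn_eqF (ltn_ord j)) // valKd.
have hc : `|(D (f k)).2 - L n| < e'.
  by have := hu n (ltnSn n); rewrite /u eqxx.
have [_ _ ha] := hD (f k).
have ha' := ha i.
have hk1 : 2 * K / (f k).+1%:R < e'.
  have hfk1 : 2 * K / e' < (f k).+1%:R.
    apply: (lt_le_trans hM); rewrite ler_nat; exact: leq_trans hMk (leqnSn _).
  rewrite ltr_pdivrMr // in hfk1.
  rewrite [X in _ < X]mulrC in hfk1.
  by rewrite ltr_pdivrMr ?ltr0n.
have hnx : `|F (fun j => L (val j)) i - F (D (f k)).1 i| <= e'.
  by apply: F_nonexp => j; rewrite distrC; apply: ltW.
have ee : e = 4 * e' by rewrite /e'; field.
move: hnx ha' (hd i) hc hk1; rewrite ee !ler_norml !ltr_norml.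
move=> /andP[a1 a2] /andP[b1 b2] /andP[c1 c2] /andP[d1 d2] h.
move: a1 a2 b1 b2 c1 c2 d1 d2 h.
set z := F _ i; set w := F _ i.
set a := (D (f k)).1 i; set c := (D (f k)).2; set q := 2 * K / _.
clearbody z w a c q e'.
move=> h1 h2 h3 h4 h5 h6 h7 h8 h9; apply/andP; split; lra.
Qed.

End Abstract.

Theorem proposition4p9 (R : realType) (n p : nat) (V : 'M[R]_(n, p)) :
  (2 <= n)%N -> (0 < p)%N ->
  exists (a : 'I_n -> R) (lam : R),
    (forall i : 'I_n, Top V (fun j => (a j)%:E) i = (lam + a i)%:E) /\
    lam%:E = rho V.
Proof.
move=> n2 p0.
have i0 : 'I_n := Ordinal (ltnW n2).
have K0 : (0 <= 2 * Kv R n p V)%R by have := @Kv0 R n p V; lra.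
have [d [c hdc]] := @abstract_eig R n i0 (@TR R n p V) (2 * Kv R n p V) K0
   (@TR_mono R n p V n2 p0) (@TR_shift R n p V n2 p0)
   (@TR_lo R n p V n2 p0) (@TR_up R n p V n2 p0).
exists d, c; split.
  by move=> i; rewrite (@TR_E R n p V n2 p0) hdc addrC.
have TRE := @TR_E R n p V n2 p0.
rewrite /rho; apply/eqP; rewrite eq_le; apply/andP; split.
  apply: ereal_sup_ubound; split; first by [].
  exists (fun j => (d j)%:E); split.
    by split => //; exists i0.
  by move=> i; rewrite TRE hdc EFinD addeC.
apply: ge_ereal_sup => lam [hlam [u [[hu1 [j0 hj0]] hu]]].
case: lam hlam hu => [l| |] //= hlam hu; last exact: leNye.
pose w j := (u j - (d j)%:E)%E.
case: (@arg_maxP _ _ _ j0 xpredT w isT) => m _ hm.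
have hw0 : (-oo < w j0)%E.
  move: (hu1 j0) hj0; rewrite /w; case: (u j0) => [r0| |] // _ _; by rewrite -EFinB ltNye.
have [r hr] : exists r, u m = r%:E.
  move: (hu1 m) (hm j0 isT) hw0; rewrite /w.
  case: (u m) => [r| |] //; first by exists r.
  by move=> _ h1 h2; have := lt_le_trans h2 h1.
have hle : forall j, (u j <= (d j + (r - d m))%:E)%E.
  move=> j; move: (hu1 j) (hm j isT); rewrite /w hr.
  case: (u j) => [rj| |] //= _; last by move=> _; exact: leNye.
  rewrite -EFinB -EFinB lee_fin => h; rewrite lee_fin; lra.
have := @Top_mono R n p V u (fun j => (d j + (r - d m))%:E) m hle.
rewrite hu hr TRE (@TR_shift R n p V n2 p0) hdc -EFinD lee_fin => h.
rewrite lee_fin; lra.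
Qed.
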